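(* Let $H$ be a bialgebra, $L\in HZ^1(H)$ a 1-cocycle and $\alpha\in H'$. Then $$\phi_{L+\delta\alpha}=\phi_L\circ\theta_{\alpha\circ\phi_L},$$ where $\phi_L,\phi_{L+\delta\alpha}\colon H_R\to H$ and $\theta_{\alpha\circ\phi_L}\colon H_R\to H_R$ are defined below.
   Context: $H_R$ is the Connes–Kreimer Hopf algebra of rooted trees over a field $\mathbb K$ of characteristic zero (basis rooted forests, $B_+$ grafts a forest onto a new root, coproduct with $\Delta\circ B_+=B_+\otimes\mathbb 1+(\mathrm{id}\otimes B_+)\circ\Delta$). For an algebra $\mathcal A$ and $M\in\operatorname{End}(\mathcal A)$, $\phi_M\colon H_R\to\mathcal A$ is the unique unital algebra morphism with $\phi_M\circ B_+=M\circ\phi_M$. For a bialgebra $H$, $HZ^1(H)=\{L\in\operatorname{End}(H):\Delta\circ L=(\mathrm{id}\otimes L)\circ\Delta+L\otimes\mathbb 1\}$, $H'=\operatorname{Hom}(H,\mathbb K)$, and $\delta\alpha:=(\mathrm{id}\otimes\alpha)\circ\Delta-\mathbb 1\cdot\alpha$ for $\alpha\in H'$. For $\beta\in H_R'$, $\theta_\beta:=\phi_{B_++\delta\beta}\colon H_R\to H_R$. *)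

(* Defs.v *)
From HB Require Import structures.
From mathcomp Require Import all_boot all_order all_algebra.
Set Implicit Arguments. Unset Strict Implicit. Unset Printing Implicit Defensive.
Import GRing.Theory.
Local Open Scope ring_scope.

(* forests are their isomorphism classes (see [iso] below).            *)
Inductive rtree := RNode of seq rtree.

Fixpoint rtree_enc (t : rtree) : GenTree.tree unit :=
  let: RNode ts := t in GenTree.Node 0 (map rtree_enc ts).

Fixpoint rtree_dec (t : GenTree.tree unit) : rtree :=
  match t with
  | GenTree.Leaf _ => RNode [::]
  | GenTree.Node _ ts => RNode (map rtree_dec ts)
  end.

Fixpoint rtree_encK_aux (t : rtree) : rtree_dec (rtree_enc t) = t :=
  match t return rtree_dec (rtree_enc t) = t with
  | RNode ts => f_equal RNode
      ((fix F (s : seq rtree) : map rtree_dec (map rtree_enc s) = s :=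
          match s return map rtree_dec (map rtree_enc s) = s with
          | [::] => erefl
          | t' :: s' => f_equal2 cons (rtree_encK_aux t') (F s')
          end) ts)
  end.

Lemma rtree_encK : cancel rtree_enc rtree_dec.
Proof. exact: rtree_encK_aux. Qed.

HB.instance Definition _ := Countable.copy rtree (can_type rtree_encK).

(* a total order on planar trees, used only to build canonical forms *)
Definition tle (t u : rtree) : bool := (pickle t <= pickle u)%N.

(* canonical planar representative of a (non-planar) rooted tree *)
Fixpoint canon (t : rtree) : rtree :=
  let: RNode ts := t in RNode (sort tle (map canon ts)).

(* forests are multisets of trees: canonical form of a forest *)
Definition canonF (f : seq rtree) : seq rtree := sort tle (map canon f).

Definition iso (f g : seq rtree) : bool := canonF f == canonF g.

(* the grafting operator B_+ on a forest: the tree RNode f *)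

(* The Connes-Kreimer Hopf algebra H_R as the free K-vector space on   *)
(* isomorphism classes of rooted forests.  An element is represented   *)
(* by a finite formal linear combination of (planar) forests;          *)
(* [eqHR] is equality in H_R (equal coefficients on every class).       *)
Section HR.
Variable K : fieldType.

Definition HR := seq (K * seq rtree).

Definition coefHR (x : HR) (f : seq rtree) : K :=
  \sum_(p <- x | iso p.2 f) p.1.

Definition eqHR (x y : HR) : Prop := forall f, coefHR x f = coefHR y f.

Definition oneHR : HR := [:: (1, [::])].
Definition addHR (x y : HR) : HR := x ++ y.
(* product: disjoint union of forests, extended bilinearly *)
Definition mulHR (x y : HR) : HR :=
  [seq (p.1 * q.1, p.2 ++ q.2) | p <- x, q <- y].
Definition bplusHR (x : HR) : HR := [seq (p.1, [:: RNode p.2]) | p <- x].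

Definition extHR (V : lmodType K) (g : seq rtree -> V) (x : HR) : V :=
  \sum_(p <- x) p.1 *: g p.2.
Definition extK (g : seq rtree -> K) (x : HR) : K :=
  \sum_(p <- x) p.1 * g p.2.

(* Coproduct of H_R on basis forests, as a list of pairs (f1, f2)     *)
(* standing for sum of f1 (x) f2 (all coefficients 1), defined by       *)
(*   Delta (B_+ f) = B_+ f (x) 1 + (id (x) B_+) Delta f,                *)
(*   Delta multiplicative, Delta 1 = 1 (x) 1.                           *)
End HR.

Fixpoint copT (t : rtree) : seq (seq rtree * seq rtree) :=
  let: RNode ts := t in
  ([:: t], [::]) ::
  [seq (p.1, [:: RNode p.2]) |
     p <- foldr (fun u acc => [seq (p.1 ++ q.1, p.2 ++ q.2) | p <- copT u, q <- acc])
                [:: ([::], [::])] ts].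

Definition copF (f : seq rtree) : seq (seq rtree * seq rtree) :=
  foldr (fun u acc => [seq (p.1 ++ q.1, p.2 ++ q.2) | p <- copT u, q <- acc])
        [:: ([::], [::])] f.

Section HR2.
Variable K : fieldType.

(* delta beta = (id (x) beta) o Delta - 1 . beta, on H_R, for beta in H_R' *)
(* (a linear functional on H_R is given by its values on basis forests)   *)
Definition deltaHR (beta : seq rtree -> K) (x : HR K) : HR K :=
  flatten [seq [seq (p.1 * beta q.2, q.1) | q <- copF p.2] | p <- x]
  ++ [:: (- extK beta x, [::])].

(* theta_beta = phi_{B_+ + delta beta} : H_R -> H_R, given on basis forests:   *)
Definition is_theta (beta : seq rtree -> K) (th : seq rtree -> HR K) : Prop :=
  [/\ forall f f', iso f f' -> eqHR (th f) (th f'),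
      eqHR (th [::]) (oneHR K),
      forall f f', eqHR (th (f ++ f')) (mulHR (th f) (th f')) &
      forall f, eqHR (th [:: RNode f])
                     (addHR (bplusHR (th f)) (deltaHR beta (th f)))].

(* phi_M : H_R -> A for an algebra A and M : A -> A, given on basis forests *)
Definition is_phi (A : algType K) (M : A -> A) (g : seq rtree -> A) : Prop :=
  [/\ forall f f', iso f f' -> g f = g f',
      g [::] = 1,
      forall f f', g (f ++ f') = g f * g f' &
      forall f, g [:: RNode f] = M (g f)].

(* Tensors.  MathComp has no tensor products; an element of U (x) V is *)
(* represented by a finite list of simple tensors, and two lists are   *)
(* equal in U (x) V iff every bilinear map agrees on them (universal   *)
(* property of the tensor product); same for triple tensors.           *)
Definition bilin (U V W : lmodType K) (B : U -> V -> W) : Prop :=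
  (forall v a u1 u2, B (a *: u1 + u2) v = a *: B u1 v + B u2 v) /\
  (forall u a v1 v2, B u (a *: v1 + v2) = a *: B u v1 + B u v2).

Definition teq2 (U V : lmodType K) (s t : seq (U * V)) : Prop :=
  forall (W : lmodType K) (B : U -> V -> W), bilin B ->
    \sum_(p <- s) B p.1 p.2 = \sum_(p <- t) B p.1 p.2.

Definition trilin (U V X W : lmodType K) (T : U -> V -> X -> W) : Prop :=
  (forall v x a u1 u2, T (a *: u1 + u2) v x = a *: T u1 v x + T u2 v x) /\
  (forall u x a v1 v2, T u (a *: v1 + v2) x = a *: T u v1 x + T u v2 x) /\
  (forall u v a x1 x2, T u v (a *: x1 + x2) = a *: T u v x1 + T u v x2).

Definition teq3 (U V X : lmodType K) (s t : seq (U * V * X)) : Prop :=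
  forall (W : lmodType K) (T : U -> V -> X -> W), trilin T ->
    \sum_(p <- s) T p.1.1 p.1.2 p.2 = \sum_(p <- t) T p.1.1 p.1.2 p.2.

Definition linmap (U V : lmodType K) (f : U -> V) : Prop :=
  forall a x y, f (a *: x + y) = a *: f x + f y.
Definition linform (U : lmodType K) (f : U -> K) : Prop :=
  forall a x y, f (a *: x + y) = a * f x + f y.

Definition is_bialgebra (H : algType K) (D : H -> seq (H * H)) (e : H -> K)
  : Prop :=
  [/\ (forall a x y, teq2 (D (a *: x + y)) ([seq (a *: p.1, p.2) | p <- D x] ++ D y)),
      (forall x, teq3
         (flatten [seq [seq (q.1, q.2, p.2) | q <- D p.1] | p <- D x])
         (flatten [seq [seq (p.1, q.1, q.2) | q <- D p.2] | p <- D x])),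
      (forall x, \sum_(p <- D x) e p.1 *: p.2 = x /\
                 \sum_(p <- D x) e p.2 *: p.1 = x),
      (forall x y, teq2 (D (x * y)) [seq (p.1 * q.1, p.2 * q.2) | p <- D x, q <- D y]
                   /\ teq2 (D 1) [:: (1, 1)]) &
      [/\ linform e, (forall x y, e (x * y) = e x * e y) & e 1 = 1]].

(* HZ^1(H): Delta o L = (id (x) L) o Delta + L (x) 1 *)
Definition is_cocycle (H : algType K) (D : H -> seq (H * H)) (L : H -> H) : Prop :=
  forall x, teq2 (D (L x)) ([seq (p.1, L p.2) | p <- D x] ++ [:: (L x, 1)]).

Definition deltaH (H : algType K) (D : H -> seq (H * H)) (alpha : H -> K) (x : H) : H :=
  \sum_(p <- D x) alpha p.2 *: p.1 - alpha x *: 1.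

End HR2.

(* Main.v *)
Require Import Defs.
Set Warnings "-all".
Set Implicit Arguments. Unset Strict Implicit.
From Stdlib Require List.
From mathcomp Require Import all_boot all_order all_algebra.
Import GRing.Theory.
Local Open Scope ring_scope.

Section Gen.
Variable K : fieldType.

Lemma lin0 (U V : lmodType K) (f : U -> V) : linmap f -> f 0 = 0.
Proof.
move=> hf; have := hf 1 0 0; rewrite !scale1r addr0 => h.
by apply: (@addrI _ (f 0)); rewrite addr0 -h.
Qed.

Lemma linD (U V : lmodType K) (f : U -> V) : linmap f -> forall x y, f (x + y) = f x + f y.
Proof. by move=> hf x y; have := hf 1 x y; rewrite !scale1r. Qed.

Lemma linZ (U V : lmodType K) (f : U -> V) : linmap f -> forall a x, f (a *: x) = a *: f x.
Proof. by move=> hf a x; have := hf a x 0; rewrite addr0 (lin0 hf) addr0. Qed.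

Lemma lin_sum (U V : lmodType K) (f : U -> V) I (s : seq I) (F : I -> U) :
  linmap f -> f (\sum_(i <- s) F i) = \sum_(i <- s) f (F i).
Proof.
move=> hf; elim: s => [|i s IH]; first by rewrite !big_nil (lin0 hf).
by rewrite !big_cons linD // IH.
Qed.

Lemma lf0 (U : lmodType K) (f : U -> K) : linform f -> f 0 = 0.
Proof.
move=> hf; have := hf 1 0 0; rewrite !scale1r addr0 mul1r => h.
by apply: (@addrI _ (f 0)); rewrite addr0 -h.
Qed.

Lemma lfD (U : lmodType K) (f : U -> K) : linform f -> forall x y, f (x + y) = f x + f y.
Proof. by move=> hf x y; have := hf 1 x y; rewrite !scale1r mul1r. Qed.

Lemma lfZ (U : lmodType K) (f : U -> K) : linform f -> forall a x, f (a *: x) = a * f x.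
Proof. by move=> hf a x; have := hf a x 0; rewrite addr0 (lf0 hf) addr0. Qed.

Lemma lf_sum (U : lmodType K) (f : U -> K) I (s : seq I) (F : I -> U) :
  linform f -> f (\sum_(i <- s) F i) = \sum_(i <- s) f (F i).
Proof.
move=> hf; elim: s => [|i s IH]; first by rewrite !big_nil lf0.
by rewrite !big_cons lfD // IH.
Qed.

Lemma teq2_refl (U V : lmodType K) (s : seq (U * V)) : teq2 s s.
Proof. by []. Qed.
Lemma teq2_sym (U V : lmodType K) (s t : seq (U * V)) : teq2 s t -> teq2 t s.
Proof. by move=> h W B hB; rewrite h. Qed.
Lemma teq2_trans (U V : lmodType K) (s t u : seq (U * V)) :
  teq2 s t -> teq2 t u -> teq2 s u.
Proof. by move=> h1 h2 W B hB; rewrite h1 // h2. Qed.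
Lemma teq2_cat (U V : lmodType K) (s s' t t' : seq (U * V)) :
  teq2 s s' -> teq2 t t' -> teq2 (s ++ t) (s' ++ t').
Proof. by move=> h1 h2 W B hB; rewrite !big_cat h1 // h2. Qed.
Lemma teq2_catC (U V : lmodType K) (s t : seq (U * V)) :
  teq2 (s ++ t) (t ++ s).
Proof. by move=> W B hB; rewrite !big_cat /= addrC. Qed.

Lemma teq2_map (U V : lmodType K) (f g : U -> U) (h : V -> V) (s t : seq (U * V)) :
  linmap f -> linmap h -> teq2 s t ->
  teq2 [seq (f p.1, h p.2) | p <- s] [seq (f p.1, h p.2) | p <- t].
Proof.
move=> hf hh st W B [B1 B2]; rewrite !big_map.
apply: (st W (fun u v => B (f u) (h v))); split.
- by move=> v a u1 u2; rewrite hf B1.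
- by move=> u a v1 v2; rewrite hh B2.
Qed.

Lemma teq2_prod (A : algType K) (s s' t t' : seq (A * A)) :
  teq2 s s' -> teq2 t t' ->
  teq2 [seq (p.1 * q.1, p.2 * q.2) | p <- s, q <- t]
       [seq (p.1 * q.1, p.2 * q.2) | p <- s', q <- t'].
Proof.
move=> ss tt W B [B1 B2].
rewrite !big_allpairs_dep /=.
transitivity (\sum_(i <- s) \sum_(j <- t') B (i.1 * j.1) (i.2 * j.2)).
  apply: eq_bigr => i _.
  apply: (tt W (fun u v => B (i.1 * u) (i.2 * v))); split.
  - by move=> v a u1 u2; rewrite mulrDr -scalerAr B1.
  - by move=> u a v1 v2; rewrite mulrDr -scalerAr B2.
rewrite exchange_big [in RHS]exchange_big /=.
apply: eq_bigr => j _.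
apply: (ss W (fun u v => B (u * j.1) (v * j.2))); split.
- by move=> v a u1 u2; rewrite mulrDl -scalerAl B1.
- by move=> u a v1 v2; rewrite mulrDl -scalerAl B2.
Qed.

End Gen.

Section Ext.
Variable K : fieldType.

Definition rep (R : seq (seq rtree)) (c : seq rtree) : seq rtree :=
  nth [::] R (index c (map canonF R)).

Lemma repK R c : c \in map canonF R -> canonF (rep R c) = c.
Proof.
move=> cR; rewrite /rep -(nth_map [::] (canonF [::])); last first.
  by rewrite -(size_map canonF) index_mem.
by rewrite nth_index.
Qed.

Lemma ext_classes (V : lmodType K) (g : seq rtree -> V)
  (gi : forall f f', iso f f' -> g f = g f') (R : seq (seq rtree)) (z : HR K) :
  {subset map snd z <= R} ->
  extHR g z = \sum_(c <- undup (map canonF R)) coefHR z (rep R c) *: g (rep R c).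
Proof.
move=> zR; rewrite /extHR.
transitivity (\sum_(p <- z) \sum_(c <- undup (map canonF R))
   (if c == canonF p.2 then p.1 *: g (rep R c) else 0)).
  rewrite [LHS]big_seq [RHS]big_seq; apply: eq_bigr => p pz.
  have pS : canonF p.2 \in undup (map canonF R).
    by rewrite mem_undup map_f // zR // map_f.
  rewrite -big_mkcond -big_filter filter_pred1_uniq ?undup_uniq // big_seq1.
  congr (_ *: _); apply: gi; rewrite /iso repK //.
  by rewrite -mem_undup.
rewrite exchange_big; apply: eq_big_seq => c cS.
rewrite /coefHR scaler_suml [RHS]big_mkcond /=; apply: eq_bigr => p _.
rewrite /iso repK; last by rewrite -mem_undup.
by rewrite eq_sym; case: eqP.
Qed.

Lemma extHR_eq (V : lmodType K) (g : seq rtree -> V)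
  (gi : forall f f', iso f f' -> g f = g f') (x y : HR K) :
  eqHR x y -> extHR g x = extHR g y.
Proof.
move=> xy.
have hx : {subset map snd x <= map snd (x ++ y)} by move=> u; rewrite map_cat mem_cat => ->.
have hy : {subset map snd y <= map snd (x ++ y)} by move=> u; rewrite map_cat mem_cat orbC => ->.
rewrite (ext_classes gi hx) (ext_classes gi hy).
by apply: eq_bigr => c _; rewrite xy.
Qed.

End Ext.

Fixpoint rtree_ind2 (P : rtree -> Prop)
  (IH : forall ts, List.Forall P ts -> P (RNode ts)) (t : rtree) : P t :=
  match t with
  | RNode ts => IH ts ((fix F (s : seq rtree) : List.Forall P s :=
       match s with
       | [::] => List.Forall_nil P
       | t' :: s' => List.Forall_cons t' (rtree_ind2 IH t') (F s')
       end) ts)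
  end.

Section Main.
Variable K : fieldType.

Lemma bilin_l (U V W : lmodType K) (B : U -> V -> W) v : bilin B -> linmap (fun u => B u v).
Proof. by case=> h1 _ a x y; rewrite h1. Qed.
Lemma bilin_r (U V W : lmodType K) (B : U -> V -> W) u : bilin B -> linmap (B u).
Proof. by case=> _ h2 a x y; rewrite h2. Qed.

Lemma D0 (H : algType K) (D : H -> seq (H * H)) (e : H -> K) :
  is_bialgebra D e -> forall (W : lmodType K) (B : H -> H -> W), bilin B ->
  \sum_(p <- D 0) B p.1 p.2 = 0.
Proof.
case=> lin _ _ _ _ W B hB.
have := lin 1 0 0; rewrite scaler0 addr0 => h.
have := h W B hB; rewrite big_cat big_map /=.
have -> : \sum_(j <- D 0) B (1 *: j.1) j.2 = \sum_(j <- D 0) B j.1 j.2.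
  by apply: eq_bigr => j _; rewrite scale1r.
move=> h2; apply: (@addrI _ (\sum_(p <- D 0) B p.1 p.2)).
by rewrite addr0 -h2.
Qed.

Lemma Dsum (H : algType K) (D : H -> seq (H * H)) (e : H -> K) :
  is_bialgebra D e -> forall (W : lmodType K) (B : H -> H -> W), bilin B ->
  forall I (s : seq I) (a : I -> K) (h : I -> H),
  \sum_(p <- D (\sum_(i <- s) a i *: h i)) B p.1 p.2 =
  \sum_(i <- s) a i *: \sum_(p <- D (h i)) B p.1 p.2.
Proof.
move=> bH W B hB I s a h; elim: s => [|i s IH].
  by rewrite !big_nil (D0 bH).
case: (bH) => lin _ _ _ _.
rewrite !big_cons (lin (a i) (h i)) // big_cat big_map /= IH.
congr (_ + _); rewrite scaler_sumr; apply: eq_bigr => p _.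
by rewrite (linZ (bilin_l _ hB)).
Qed.

Lemma phiL_coalg (H : algType K) (D : H -> seq (H * H)) (e : H -> K)
  (L : H -> H) (phiL : seq rtree -> H) :
  is_bialgebra D e -> linmap L -> is_cocycle D L -> is_phi L phiL ->
  forall f, teq2 (D (phiL f)) [seq (phiL q.1, phiL q.2) | q <- copF f].
Proof.
move=> bH Llin coc [_ ph0 phM phB].
case: (bH) => _ _ _ Dmul _.
have forest : forall ts, List.Forall (fun t =>
     teq2 (D (phiL [:: t])) [seq (phiL q.1, phiL q.2) | q <- copT t]) ts ->
     teq2 (D (phiL ts)) [seq (phiL q.1, phiL q.2) | q <- copF ts].
  elim=> [|t ts IH] hF.
    rewrite ph0; apply: teq2_trans (proj2 (Dmul 1 1)) _.
    by move=> W B hB; rewrite /= !big_cons !big_nil ph0.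
  inversion hF as [|t' ts' ht hts]; subst.
  have -> : t :: ts = [:: t] ++ ts by [].
  rewrite phM; apply: teq2_trans (proj1 (Dmul _ _)) _.
  apply: teq2_trans (teq2_prod ht (IH hts)) _.
  move=> W B _; rewrite big_map !big_allpairs_dep big_map.
  apply: eq_bigr => p _; rewrite big_map; apply: eq_bigr => q _ /=.
  by rewrite !phM.
move=> f; apply forest.
elim/List.list_ind: f => [|t f IHf]; first by constructor.
constructor => //; clear IHf.
elim/rtree_ind2: t => ts hts.
have hF := forest ts hts.
rewrite phB; apply: teq2_trans (coc _) _.
move=> W B hB; rewrite big_cat big_map /=.
rewrite big_cons big_nil /= addr0 big_cons /=.
change (foldr _ _ ts) with (copF ts).
rewrite !big_map /= phB ph0 addrC; congr (_ + _).
have hB' : bilin (fun u v => B u (L v)).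
  by case: hB => h1 h2; split=> *; [rewrite h1 | rewrite Llin h2].
rewrite (hF W _ hB') big_map; apply: eq_bigr => q _ /=.
by rewrite phB.
Qed.

End Main.

Unset Implicit Arguments. Set Strict Implicit.

Theorem mainTheorem14 (K : fieldType) (charK0 : [pchar K] =i pred0)
  (H : algType K) (D : H -> seq (H * H)) (e : H -> K)
  (bialgH : is_bialgebra D e)
  (L : H -> H) (Llin : linmap L) (Lcoc : is_cocycle D L)
  (alpha : H -> K) (alphalin : linform alpha)
  (phiL phiLa : seq rtree -> H) (theta : seq rtree -> HR K) :
  is_phi L phiL ->
  is_phi (fun x => L x + deltaH D alpha x) phiLa ->
  is_theta (fun f => alpha (phiL f)) theta ->
  forall f : seq rtree, phiLa f = extHR phiL (theta f).
Proof.
move=> hL hLa hth.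
have phL := hL; case: hL => phI ph0 phM phB.
case: hLa => _ pa0 paM paB.
case: hth => _ th0 thM thB.
have ext_eq := extHR_eq phI.
have psi0 : extHR phiL (theta [::]) = 1.
  by rewrite (ext_eq _ _ th0) /extHR big_cons big_nil /= ph0 scale1r addr0.
have extM : forall x y, extHR phiL (mulHR x y) = extHR phiL x * extHR phiL y.
  move=> x y; rewrite /extHR /mulHR big_allpairs_dep /= big_distrl /=.
  apply: eq_bigr => p _; rewrite big_distrr /=; apply: eq_bigr => q _ /=.
  by rewrite phM -scalerAl -scalerAr scalerA.
have psiM : forall f f', extHR phiL (theta (f ++ f')) =
    extHR phiL (theta f) * extHR phiL (theta f').
  by move=> f f'; rewrite (ext_eq _ _ (thM f f')) extM.
have psiB : forall ts, extHR phiL (theta [:: RNode ts]) =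
    L (extHR phiL (theta ts)) + deltaH D alpha (extHR phiL (theta ts)).
  move=> ts; rewrite (ext_eq _ _ (thB ts)).
  set x := theta ts.
  rewrite {1}/extHR /addHR big_cat; congr (_ + _).
    rewrite /bplusHR big_map /= /extHR (lin_sum _ _ Llin); apply: eq_bigr => p _.
    by rewrite phB (linZ Llin).
  rewrite /deltaHR /deltaH big_cat big_cons big_nil /= ph0 addr0 big_flatten big_map /=.
  have alx : alpha (extHR phiL x) = extK (fun f => alpha (phiL f)) x.
    rewrite /extHR (lf_sum _ _ alphalin) /extK; apply: eq_bigr => p _.
    by rewrite (lfZ alphalin).
  rewrite alx scaleNr; congr (_ - _).
  have hB : bilin (fun (u v : H) => alpha v *: u).
    split.
      by move=> v a u1 u2; rewrite scalerDr !scalerA mulrC.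
    by move=> u a v1 v2; rewrite alphalin scalerDl scalerA.
  rewrite /extHR (Dsum bialgH hB x (fun p => p.1) (fun p => phiL p.2)) /=.
  apply: eq_bigr => p _.
  rewrite big_map (phiL_coalg bialgH Llin Lcoc phL _ hB) big_map scaler_sumr.
  by apply: eq_bigr => q _ /=; rewrite scalerA.
have forest : forall ts, List.Forall (fun t => phiLa [:: t] = extHR phiL (theta [:: t])) ts ->
    phiLa ts = extHR phiL (theta ts).
  elim=> [|t ts IH] hF; first by rewrite pa0 psi0.
  inversion hF as [|t' ts' ht hts]; subst.
  have -> : t :: ts = [:: t] ++ ts by [].
  by rewrite paM psiM ht (IH hts).
move=> f; apply forest; elim/List.list_ind: f => [|t f IHf]; constructor => //.
elim/rtree_ind2: t => ts hts.
by rewrite paB psiB (forest ts hts).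
Qed.
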